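(* For every integer $n\geq 2$, $\operatorname{adim}(P_2\square P_n)\leq \left\lceil \frac{3n-1}{4}\right\rceil$.
   Context: $P_n$ is the path on $n$ vertices and $\square$ is the Cartesian product of graphs. For a graph $G$, $d(u,v)$ is the shortest-path distance and $d_1(u,v)=\min(d(u,v),2)$. A set $A\subseteq V(G)$ is an adjacency resolving set if for all distinct $x,y\in V(G)$ there is $z\in A$ with $d_1(z,x)\neq d_1(z,y)$; $\operatorname{adim}(G)$ is the minimum cardinality of an adjacency resolving set. *)

(* Defs.v *)
From mathcomp Require Import all_boot.
Set Implicit Arguments. Unset Strict Implicit. Unset Printing Implicit Defensive.

(* Truncated distance d_1(u,v) = min(d(u,v), 2): it is 0 iff u = v, 1 iff u,v adjacent,
   and 2 otherwise (including the case of distinct non-adjacent / disconnected vertices). *)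
Definition d1 (T : finType) (adj : rel T) (u v : T) : nat :=
  if u == v then 0 else if adj u v then 1 else 2.

Definition adj_resolving (T : finType) (adj : rel T) (A : {set T}) : bool :=
  [forall x : T, forall y : T, (x != y) ==> [exists z in A, d1 adj z x != d1 adj z y]].

(* adjacency dimension: minimum cardinality of an adjacency resolving set
   (V(G) itself is always resolving, so #|T| is a valid default). *)
Definition adim (T : finType) (adj : rel T) : nat :=
  \big[minn/#|T|]_(A : {set T} | adj_resolving adj A) #|A|.

Definition path_adj (n : nat) : rel 'I_n :=
  fun i j => (i.+1 == j :> nat) || (j.+1 == i :> nat).

Definition cart_adj (T1 T2 : finType) (a1 : rel T1) (a2 : rel T2) : rel (T1 * T2) :=
  fun x y => ((x.1 == y.1) && a2 x.2 y.2) || ((x.2 == y.2) && a1 x.1 y.1).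

Definition P2xPn_adj (n : nat) : rel ('I_2 * 'I_n) := cart_adj (@path_adj 2) (@path_adj n).

(* Main.v *)
Require Import Defs.
From mathcomp Require Import all_boot.
From mathcomp Require Import zify.

Definition Pm (r t : nat) : bool :=
  (t == 2) || (t == 6) || ((t == 0) && (r == 0)) || ((t == 4) && (r == 1)).

Definition Ff (s r k : nat) : bool :=
  match s with
  | 0 => (r, k) \in [:: (0,0); (1,1)]
  | 1 => (r, k) \in [:: (0,0); (0,1); (1,0)]
  | 2 => (r, k) \in [:: (0,1); (0,2)]
  | 3 => (r, k) \in [:: (0,0); (0,2)]
  | 4 => (r, k) \in [:: (0,0); (0,2)]
  | 5 => (r, k) \in [:: (0,0); (0,1); (0,2)]
  | 6 => (r, k) \in [:: (0,0); (0,2)]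
  | _ => (r, k) \in [:: (1,0); (1,2)]
  end.

Definition inA (n r c : nat) : bool :=
  if c + 3 < n then Pm r (c %% 8) else Ff (n %% 8) r (c + 3 - n).

Definition adjv (r i r' j : nat) : bool :=
  ((r == r') && ((i.+1 == j) || (j.+1 == i))) || ((i == j) && ((r.+1 == r') || (r'.+1 == r))).

Definition nbr (r i : nat) : seq (nat * nat) := [:: (1 - r, i); (r, i.-1); (r, i.+1)].
Definition cand r i r' j := nbr r i ++ nbr r' j.
Definition okz (a : nat -> nat -> bool) n r i r' j (z : nat * nat) :=
  (z.1 < 2) && (z.2 < n) && a z.1 z.2 && (adjv z.1 z.2 r i != adjv z.1 z.2 r' j).
Definition sepb a n r i r' j := has (okz a n r i r' j) (cand r i r' j).
Definition Good a n r i r' j :=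
  ((r == r') && (i == j)) || a r i || a r' j || sepb a n r i r' j.
Definition hastr (a : nat -> nat -> bool) n r i :=
  has (fun z => (z.1 < 2) && (z.2 < n) && a z.1 z.2) (nbr r i).

Definition base_ok n := all (fun i => all (fun j => all (fun r => all (fun r' =>
  Good (inA n) n r i r' j) (iota 0 2)) (iota 0 2)) (iota 0 n)) (iota 0 n).

Lemma base : all base_ok (iota 2 14).
Proof. by vm_compute. Qed.

Lemma L1 m : all (fun i => all (fun j => all (fun r => all (fun r' =>
  Good (inA (16 + m)) (16 + m) r i r' j) (iota 0 2)) (iota 0 2)) (iota 0 12)) (iota 0 12).
Proof. by vm_compute. Qed.

Lemma L2 m : all (fun i => all (fun r => inA (16 + m) r i || hastr (inA (16 + m)) (16 + m) r i)
   (iota 0 2)) (iota 0 12).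
Proof. by vm_compute. Qed.

Lemma inAsh n r c : inA (n + 8) r (c + 8) = inA n r c.
Proof.
rewrite /inA addnAC ltn_add2r !modnDr subnDr //.
Qed.

Lemma adjv_sh r i r' j : adjv r (i + 8) r' (j + 8) = adjv r i r' j.
Proof. by rewrite /adjv -!addSn !eqn_add2r. Qed.

Lemma Good_sh n i j r r' : 1 <= i -> 1 <= j ->
  Good (inA (n + 8)) (n + 8) r (i + 8) r' (j + 8) = Good (inA n) n r i r' j.
Proof.
case: i => // i _; case: j => // j _.
rewrite /Good !inAsh eqn_add2r; congr (_ || _).
rewrite /sepb.
have -> : cand r (i.+1 + 8) r' (j.+1 + 8) =
   map (fun z => (z.1, z.2 + 8)) (cand r i.+1 r' j.+1).
  by rewrite /cand /nbr /= !addSn.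
rewrite has_map; apply: eq_has => -[zr zc].
by rewrite /okz /= ltn_add2r inAsh !adjv_sh.
Qed.

Lemma far_sep a n r i r' j : r < 2 -> a r i = false -> hastr a n r i ->
  (i + 3 <= j) || (j + 3 <= i) -> sepb a n r i r' j.
Proof.
move=> r2 ari /hasP [[zr zc] zin /andP[/andP[z1 z2] az]] far.
apply/hasP; exists (zr, zc); first by rewrite mem_cat zin.
rewrite /okz /= z1 z2 az /=.
move: zin; rewrite /nbr !inE => /or3P[] /eqP [? ?]; subst zr zc.
- rewrite /adjv; apply/negP => /eqP; lia.
- move: ari far z1 z2 az; case: i => [|i] ari far z1 z2 az; first by rewrite /= ari in az.
  rewrite /adjv; apply/negP => /eqP; lia.
- rewrite /adjv; apply/negP => /eqP; lia.
Qed.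

Lemma far_sep2 a n r i r' j : r' < 2 -> a r' j = false -> hastr a n r' j ->
  (i + 3 <= j) || (j + 3 <= i) -> sepb a n r i r' j.
Proof.
move=> r2 ari /hasP [[zr zc] zin /andP[/andP[z1 z2] az]] far.
apply/hasP; exists (zr, zc); first by rewrite mem_cat zin orbT.
rewrite /okz /= z1 z2 az /=.
move: zin; rewrite /nbr !inE => /or3P[] /eqP [? ?]; subst zr zc.
- rewrite /adjv; apply/negP => /eqP; lia.
- move: ari far z1 z2 az; case: j => [|j] ari far z1 z2 az; first by rewrite /= ari in az.
  rewrite /adjv; apply/negP => /eqP; lia.
- rewrite /adjv; apply/negP => /eqP; lia.
Qed.

Lemma main n : 2 <= n -> forall i j r r', i < n -> j < n -> r < 2 -> r' < 2 ->
  Good (inA n) n r i r' j.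
Proof.
elim/ltn_ind: n => n IH n2 i j r r' iN jn r2 r'2.
case: (ltnP n 16) => [n16|n16].
  have := base; move/allP/(_ n); rewrite mem_iota n2 /= => /(_ n16).
  move/allP/(_ i); rewrite mem_iota iN => /(_ isT).
  move/allP/(_ j); rewrite mem_iota jn => /(_ isT).
  move/allP/(_ r); rewrite mem_iota r2 => /(_ isT).
  by move/allP/(_ r'); rewrite mem_iota r'2 => /(_ isT).
have [m nm] : exists m, n = 16 + m by exists (n - 16); lia.
subst n.
case: (boolP ((9 <= i) && (9 <= j))) => [/andP[i9 j9] | ij9].
  have -> : 16 + m = (8 + m) + 8 by lia.
  have -> : i = (i - 8) + 8 by lia.
  have -> : j = (j - 8) + 8 by lia.
  rewrite Good_sh; try lia.
  apply: IH; lia.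
case: (boolP ((i < 12) && (j < 12))) => [/andP[i12 j12] | ij12].
  have := L1 m.
  move/allP/(_ i); rewrite mem_iota i12 => /(_ isT).
  move/allP/(_ j); rewrite mem_iota j12 => /(_ isT).
  move/allP/(_ r); rewrite mem_iota r2 => /(_ isT).
  by move/allP/(_ r'); rewrite mem_iota r'2 => /(_ isT).
rewrite /Good.
case Ax: (inA (16 + m) r i); first by rewrite orbT.
case Ay: (inA (16 + m) r' j); first by rewrite orbT.
rewrite /= orbF.
case: (ltnP i 9) => [i9 | i9].
  have := L2 m.
  move/allP/(_ i); rewrite mem_iota (ltn_trans i9) // => /(_ isT).
  move/allP/(_ r); rewrite mem_iota r2 Ax => /(_ isT) /= tr.
  by rewrite far_sep ?orbT //; lia.
have j9 : j < 9 by lia.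
have := L2 m.
move/allP/(_ j); rewrite mem_iota (ltn_trans j9) // => /(_ isT).
move/allP/(_ r'); rewrite mem_iota r'2 Ay => /(_ isT) /= tr.
by rewrite far_sep2 ?orbT //; lia.
Qed.

Definition cnt n := \sum_(c < n) (inA n 0 c + inA n 1 c).

Lemma cntE n : cnt n = sumn (map (fun c => inA n 0 c + inA n 1 c) (iota 0 n)).
Proof. by rewrite /cnt sumnE big_map -[n in iota 0 n](subn0 n) -/(index_iota 0 n) big_mkord. Qed.

Lemma cnt_base : all (fun n => sumn (map (fun c => inA n 0 c + inA n 1 c) (iota 0 n))
   <= (3 * n + 2) %/ 4) (iota 2 14).
Proof. by vm_compute. Qed.

Lemma cnt_bound n : 2 <= n -> cnt n <= (3 * n + 2) %/ 4.
Proof.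
elim/ltn_ind: n => n IH n2.
case: (ltnP n 16) => [n16|n16].
  by have := cnt_base; move/allP/(_ n); rewrite mem_iota n2 /= cntE => /(_ n16).
have [m nm] : exists m, n = 8 + (8 + m) by exists (n - 16); lia.
subst n.
have -> : cnt (8 + (8 + m)) = 6 + cnt (8 + m).
  rewrite /cnt big_split_ord /=; congr (_ + _).
    rewrite !big_ord_recr big_ord0 /=.
    by [].
have := IH (8 + m) ltac:(lia) ltac:(lia).
have -> : 3 * (8 + (8 + m)) + 2 = 6 * 4 + (3 * (8 + m) + 2) by lia.
by rewrite divnMDl.
Qed.

Lemma bigmin_le (T : finType) (P : pred T) (F : T -> nat) x0 j :
  P j -> \big[minn/x0]_(i | P i) F i <= F j.
Proof.
move=> Pj; have : j \in index_enum T by rewrite mem_index_enum.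
elim: (index_enum T) => [|a s IH] //; rewrite inE big_cons.
case/predU1P => [<-|js]; first by rewrite Pj geq_minl.
by case: (P a); rewrite ?geq_min IH ?orbT.
Qed.

Lemma cartE n (u v : 'I_2 * 'I_n) : P2xPn_adj u v = adjv u.1 u.2 v.1 v.2.
Proof. by rewrite /P2xPn_adj /cart_adj /path_adj /adjv orbC. Qed.

Theorem lemma4p8 (n : nat) : 2 <= n ->
  adim (@P2xPn_adj n) <= (3 * n + 2) %/ 4.
Proof.
move=> n2.
pose A := [set v : 'I_2 * 'I_n | inA n v.1 v.2].
have cardA : #|A| = cnt n.
  transitivity (\sum_(v : 'I_2 * 'I_n) (inA n v.1 v.2 : nat)).
    rewrite -sum1_card big_mkcond; apply: eq_bigr => v _; rewrite inE.
    by case: inA.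
  rewrite -(pair_bigA _ (fun (r : 'I_2) (c : 'I_n) => (inA n r c : nat))) exchange_big /cnt.
  by apply: eq_bigr => c _; rewrite !big_ord_recl big_ord0 /= addn0.
have resA : adj_resolving (@P2xPn_adj n) A.
  apply/forallP => x; apply/forallP => y; apply/implyP => xy.
  case Ax: (x \in A).
    apply/existsP; exists x; rewrite Ax /= /d1 eqxx.
    case: ifP => [/eqP e|_]; first by rewrite e eqxx in xy.
    by case: ifP.
  case Ay: (y \in A).
    apply/existsP; exists y; rewrite Ay /= /d1 eqxx.
    case: ifP => [/eqP e|_]; first by rewrite e eqxx in xy.
    by case: ifP.
  have := @main n n2 x.2 y.2 x.1 y.1 (ltn_ord x.2) (ltn_ord y.2) (ltn_ord x.1) (ltn_ord y.1).
  rewrite /Good; have Ax' := Ax; have Ay' := Ay; rewrite !inE in Ax' Ay'.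
  rewrite Ax' Ay' /= !orbF.
  case/orP => [/andP[/eqP e1 /eqP e2] | ].
    by move: xy; case: x {Ax Ax'} e1 e2 => [x1 x2]; case: y {Ay Ay'} => [y1 y2] /= /val_inj -> /val_inj ->; rewrite eqxx.
  case/hasP => -[zr zc] _ /andP[/andP[/andP[zr2 zcn] az] ne] /=.
  apply/existsP; exists (Ordinal zr2, Ordinal zcn).
  have zA : (Ordinal zr2, Ordinal zcn) \in A by rewrite inE.
  rewrite zA /= /d1.
  have -> : ((Ordinal zr2, Ordinal zcn) == x) = false.
    by apply/negbTE; apply: contraTneq zA => ->; rewrite Ax.
  have -> : ((Ordinal zr2, Ordinal zcn) == y) = false.
    by apply/negbTE; apply: contraTneq zA => ->; rewrite Ay.
  rewrite !cartE /=.
  by move: ne; case: (adjv _ _ x.1 x.2); case: (adjv _ _ y.1 y.2).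
rewrite /adim.
apply: (leq_trans (@bigmin_le _ (fun B => adj_resolving (@P2xPn_adj n) B) (fun B => #|B|) #|{: 'I_2 * 'I_n}| A resA)).
by rewrite cardA cnt_bound.
Qed.
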